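(* Let $\mathbf C$ be a finite dimensional clone $\tau$-algebra. Then: (i) the $\rho_{\mathbf C}$-algebra $\mathbf R_{\mathbf C}$ is isomorphic to the free $\rho_{\mathbf C}$-algebra over a countably infinite set of generators in the variety $\mathrm{Var}(\mathbf R_{\mathbf C})$ generated by $\mathbf R_{\mathbf C}$; (ii) the clone $\rho_{\mathbf C}$-algebra $\overline{\mathbf R}_{\mathbf C}$ is isomorphic to the clone $\mathrm{Var}(\mathbf R_{\mathbf C})$-algebra.
   Context: A clone $\tau$-algebra is an algebra $\mathbf C=(C,\sigma^{\mathbf C}\ (\sigma\in\tau),q_n^{\mathbf C}\ (n\ge0),\mathsf e_i^{\mathbf C}\ (i\ge1))$ with $\mathsf e_i$ nullary, $q_n$ of arity $n+1$, satisfying: (C1) $q_n(\mathsf e_i,x_1,\dots,x_n)=x_i$ ($1\le i\le n$); (C2) $q_n(\mathsf e_j,x_1,\dots,x_n)=\mathsf e_j$ ($j>n$); (C3) $q_n(x,\mathsf e_1,\dots,\mathsf e_n)=x$; (C4) $q_k(x,y_1,\dots,y_k)=q_n(x,y_1,\dots,y_k,\mathsf e_{k+1},\dots,\mathsf e_n)$ ($n>k$); (C5) $q_n(q_n(x,\mathbf y),\mathbf z)=q_n(x,q_n(y_1,\mathbf z),\dots,q_n(y_n,\mathbf z))$; (C6) $q_n(\sigma(x_1,\dots,x_k),\mathbf y)=\sigma(q_n(x_1,\mathbf y),\dots,q_n(x_k,\mathbf y))$ for $\sigma\in\tau$ of arity $k$. An element $a$ is independent of $\mathsf e_n$ if $q_n(a,\mathsf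 e_1,\dots,\mathsf e_{n-1},\mathsf e_{n+1})=a$; its dimension is the largest $n$ on which it depends ($0$ if none, infinite if infinitely many); $\mathbf C$ is finite dimensional if all elements have finite dimension. A function $f:C^k\to C$ is $\mathbf C$-representable if $f(\mathsf e_1,\dots,\mathsf e_k)$ has dimension $\le k$ and $f(a_1,\dots,a_k)=q_k(f(\mathsf e_1,\dots,\mathsf e_k),a_1,\dots,a_k)$ for all $a_i\in C$; $R_{\mathbf C}$ is the set of $\mathbf C$-representable functions. The type $\rho_{\mathbf C}$ has one operation symbol $\overline f$ of arity $k$ for each $k$-ary $f\in R_{\mathbf C}$; $\mathbf R_{\mathbf C}=(C,f)_{f\in R_{\mathbf C}}$ is the $\rho_{\mathbf C}$-algebra interpreting $\overline f$ as $f$; $\overline{\mathbf R}_{\mathbf C}=(\mathbf R_{\mathbf C},q_n^{\mathbf C},\mathsf e_i^{\mathbf C})$ is a clone $\rho_{\mathbf C}$-algebra. For a variety $\mathcal V$ of $\nu$-algebras with free algebra $\mathbf F_{\mathcal V}$ over the countable set $I=\{v_1,v_2,\dots\}$ of free generators, the clone $\mathcal V$-algebra is $(\mathbf F_{\mathcal V},q_n^{\mathbf F},\mathsf e_i^{\mathbf F})$ with $\mathsf e_i^{\mathbf F}=v_i$ and $q_n^{\mathbf F}(a,b_1,\dots,b_n)=s(a)$, where $s$ is the unique endomorphism of $\mathbf F_{\mathcal V}$ with $s(v_i)=b_i$ for $i\le n$ and $s(v_i)=v_i$ for $i>n$. *)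

(* Defs.v *)
From mathcomp Require Import all_boot.
Set Implicit Arguments.
Unset Strict Implicit.
Unset Printing Implicit Defensive.

(* Conventions: all indices are 0-based.  The nullary constant e_(i+1) of the
   paper is [e i] (i : nat); an n-tuple (y_1,...,y_n) is a function
   ['I_n -> C] with y_(j+1) = y j; the free generator v_(i+1) is variable [i]. *)

Inductive term (S : Type) (ar : S -> nat) : Type :=
| Var : nat -> term ar
| App : forall s : S, ('I_(ar s) -> term ar) -> term ar.
Arguments Var {S ar}.
Arguments App {S ar}.

Fixpoint eval (S : Type) (ar : S -> nat) (A : Type)
  (op : forall s : S, ('I_(ar s) -> A) -> A) (x : nat -> A) (t : term ar) : A :=
  match t with
  | Var i => x i
  | App s ts => op s (fun j => eval op x (ts j))
  end.

(* The term
   functions form the subalgebra of A^(A^omega) generated by the projections,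
   i.e. the free algebra over the countable set of generators {v_1, v_2, ...}
   (v_(i+1) = i-th projection) in the variety Var(A, op). *)
Definition term_fun (S : Type) (ar : S -> nat) (A : Type)
  (op : forall s : S, ('I_(ar s) -> A) -> A) (g : (nat -> A) -> A) : Prop :=
  exists t : term ar, forall x, g x = eval op x t.

(* phi : A -> A^(A^omega) is an isomorphism of (A, op) onto the free algebra
   F_Var(A)(omega) (elements of the latter compared extensionally). *)
Definition iso_onto_free (S : Type) (ar : S -> nat) (A : Type)
  (op : forall s : S, ('I_(ar s) -> A) -> A) (phi : A -> (nat -> A) -> A) : Prop :=
  [/\ forall a, term_fun op (phi a),
      forall g, term_fun op g -> exists a, forall x, phi a x = g x,
      forall a b, (forall x, phi a x = phi b x) -> a = b
    & forall s (args : 'I_(ar s) -> A) x,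
        phi (op s args) x = op s (fun j => phi (args j) x)].

Section Clone.
Variables (tau : Type) (ar : tau -> nat) (C : Type).
Variable sig : forall s : tau, ('I_(ar s) -> C) -> C.
Variable q : forall n : nat, C -> ('I_n -> C) -> C.
Variable e : nat -> C.

Definition pad_e k (y : 'I_k -> C) (i : nat) : C :=
  match insub i with Some j => y j | None => e i end.

Definition is_clone_alg : Prop :=
  (forall n (y : 'I_n -> C) (i : 'I_n), q (e i) y = y i) /\
  (forall n (y : 'I_n -> C) (j : nat), n <= j -> q (e j) y = e j) /\
  (forall n x, q x (fun i : 'I_n => e i) = x) /\
  (forall k n x (y : 'I_k -> C), k < n ->
                 q x y = q x (fun i : 'I_n => pad_e y i)) /\
  (forall n x (y z : 'I_n -> C),
                 q (q x y) z = q x (fun i => q (y i) z)) /\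
  (forall n s (xs : 'I_(ar s) -> C) (y : 'I_n -> C),
                 q (sig xs) y = sig (fun j => q (xs j) y)).

(* a is independent of e_n (n >= 1):
   q_n(a, e_1, ..., e_(n-1), e_(n+1)) = a *)
Definition indep (a : C) (n : nat) : Prop :=
  q a (fun i : 'I_n => if i.+1 < n then e i else e n) = a.

Definition dim_le (a : C) (k : nat) : Prop := forall n, k < n -> indep a n.

Definition finite_dim : Prop := forall a, exists k, dim_le a k.

Definition representable k (f : ('I_k -> C) -> C) : Prop :=
  dim_le (f (fun i => e i)) k /\
  forall a : 'I_k -> C, f a = q (f (fun i => e i)) a.

(* the type rho_C: one symbol of arity k for each k-ary representable f *)
Definition rsym : Type := {k : nat & {f : ('I_k -> C) -> C | representable f}}.
Definition rar (s : rsym) : nat := projT1 s.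
(* R_C interprets the symbol of f as f *)
Definition rop (s : rsym) : ('I_(rar s) -> C) -> C := proj1_sig (projT2 s).

End Clone.

(* Clone operations of the clone Var(A)-algebra on F = term functions:
   e_(i+1)^F = v_(i+1) = i-th projection, and
   q_n^F(g, h_1..h_n) = s(g), s the endomorphism with v_i |-> h_i (i <= n),
   v_i |-> v_i (i > n); on term functions s acts by substitution. *)
Definition eF (A : Type) (i : nat) : (nat -> A) -> A := fun x => x i.
Definition qF (A : Type) n (g : (nat -> A) -> A) (h : 'I_n -> (nat -> A) -> A)
  : (nat -> A) -> A :=
  fun x => g (fun i => match insub i with Some j => h j x | None => x i end).

(* Main.v *)
Require Import Defs.
From mathcomp Require Import all_boot.
From mathcomp Require Import zify.
From Stdlib Require Import FunctionalExtensionality ClassicalEpsilon.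

Definition tr {C : Type} n (x : nat -> C) : 'I_n -> C := fun i => x i.

Lemma step (tau : Type) (ar : tau -> nat) (C : Type)
  (sig : forall s : tau, ('I_(ar s) -> C) -> C)
  (q : forall n : nat, C -> ('I_n -> C) -> C) (e : nat -> C) :
  is_clone_alg sig q e -> forall a k n x, dim_le q e a k -> k <= n ->
  q n.+1 a (tr n.+1 x) = q n a (tr n x).
Proof.
move=> [C1 [C2 [C3 [C4 [C5 C6]]]]] a k n x Hd kn.
have Hi := Hd n.+1 kn.
rewrite /indep in Hi.
have star : forall y : 'I_n.+1 -> C, q n.+1 a y =
   q n.+1 a (fun i : 'I_n.+1 => if i < n then y i else e n.+1).
  move=> y. rewrite -{1}Hi C5. congr (q _ a _); apply: functional_extensionality => i.
  rewrite ltnS; case: ifP => hi; first by rewrite C1.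
  by rewrite C2.
rewrite (C4 n n.+1 a (tr n x) (ltnSn n)) star [RHS]star.
congr (q _ a _); apply: functional_extensionality => i.
case: ifP => hi //; rewrite /pad_e /tr.
by case: insubP => [j _ hj|]; [rewrite hj|rewrite hi].
Qed.

Lemma Lgen (tau : Type) (ar : tau -> nat) (C : Type)
  (sig : forall s : tau, ('I_(ar s) -> C) -> C)
  (q : forall n : nat, C -> ('I_n -> C) -> C) (e : nat -> C) :
  is_clone_alg sig q e -> forall a k n x, dim_le q e a k -> k <= n ->
  q n a (tr n x) = q k a (tr k x).
Proof.
move=> H a k n x Hd kn. rewrite -(subnKC kn).
elim: (n - k) => [|d IH]; first by rewrite addn0.
rewrite addnS (@step _ _ _ _ _ _ H _ _ _ _ Hd) //; exact: leq_addr.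
Qed.

Theorem theorem10p5 (tau : Type) (ar : tau -> nat) (C : Type)
  (sig : forall s : tau, ('I_(ar s) -> C) -> C)
  (q : forall n : nat, C -> ('I_n -> C) -> C) (e : nat -> C) :
  is_clone_alg sig q e -> finite_dim q e ->
  (* (i) R_C is isomorphic to the free Var(R_C)-algebra over omega generators *)
  (exists phi : C -> (nat -> C) -> C, iso_onto_free (rop (q:=q) (e:=e)) phi) /\
  (* (ii) the clone algebra Rbar_C is isomorphic to the clone Var(R_C)-algebra *)
  (exists phi : C -> (nat -> C) -> C,
     [/\ iso_onto_free (rop (q:=q) (e:=e)) phi,
         forall i x, phi (e i) x = eF i x
       & forall n a (b : 'I_n -> C) x,
           phi (q n a b) x = qF (phi a) (fun j => phi (b j)) x]).
Proof.
move=> H fd.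
have LG := @Lgen _ _ _ _ _ _ H.
have [C1 [C2 [C3 [C4 [C5 C6]]]]] := H.
pose K a := proj1_sig (constructive_indefinite_description _ (fd a)).
have HK : forall a, dim_le q e a (K a).
  move=> a; exact: (proj2_sig (constructive_indefinite_description _ (fd a))).
pose phi a x := q (K a) a (tr (K a) x).
have phiE : forall a n x, K a <= n -> phi a x = q n a (tr n x).
  by move=> a n x kn; rewrite /phi (LG a (K a) n x).
have QF : forall n a (b : 'I_n -> C) x,
           phi (q n a b) x = qF (phi a) (fun j => phi (b j)) x.
  move=> n a b x.
  pose N := maxn (maxn (K a) (K (q n a b))) (maxn n.+1 (\max_(j < n) K (b j))).
  have h1 : K a <= N by rewrite /N; lia.
  have h2 : K (q n a b) <= N by rewrite /N; lia.
  have h3 : n < N by rewrite /N; lia.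
  have h4 : forall j, K (b j) <= N.
    move=> j; apply: (leq_trans (leq_bigmax (F := fun j => K (b j)) j)); rewrite /N.
    apply: leq_trans (leq_maxr (maxn (K a) (K (q n a b))) _); exact: leq_maxr.
  rewrite /qF (phiE a N) // (phiE (q n a b) N) // (C4 n N a b h3) C5.
  congr (q N a _); apply: functional_extensionality => i.
  rewrite /pad_e /tr.
  case: insubP => [j _ hj|hi]; first by rewrite (phiE _ N).
  by rewrite (C1 N (tr N x) i).
have QE : forall i x, phi (e i) x = eF i x.
  move=> i x; rewrite (phiE _ (maxn (K (e i)) i.+1)); last by lia.
  have hi : i < maxn (K (e i)) i.+1 by lia.
  exact: (C1 _ (tr _ x) (Ordinal hi)).
have hom : forall (s : rsym q e) (args : 'I_(rar s) -> C) x,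
    phi (@rop C q e s args) x = @rop C q e s (fun j => phi (args j) x).
  case=> m [f Hp] args x; rewrite /rop /=; have [Hd Hf] := Hp.
  rewrite Hf [RHS]Hf QF /qF.
  rewrite (phiE _ (maxn (K (f (fun i => e i))) m)); last by lia.
  rewrite (LG _ m); [|exact: Hd|lia].
  congr (q m _ _); apply: functional_extensionality => j.
  by rewrite /tr valK.
have iso : iso_onto_free (rop (q:=q) (e:=e)) phi.
  split => //.
  - move=> a.
    have rep : representable q e (fun y : 'I_(K a) -> C => q (K a) a y).
      by split; rewrite C3 //; apply: HK.
    exists (App (existT _ (K a) (exist _ _ rep) : rsym q e) (fun j => Var j)).
    by [].
  - move=> g [t Ht].
    suff: exists a, forall x, phi a x = eval (@rop C q e) x t.
      by case=> a Ha; exists a => x; rewrite Ht Ha.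
    elim: t {Ht} => [i|s ts IH].
      by exists (e i) => x; rewrite QE.
    pose f j := proj1_sig (constructive_indefinite_description _ (IH j)).
    exists (@rop C q e s f) => x; rewrite hom /=.
    congr (@rop C q e s _); apply: functional_extensionality => j.
    exact: (proj2_sig (constructive_indefinite_description _ (IH j))).
  - move=> a b Hab.
    have := Hab e; rewrite /phi /tr !C3 //.
split; first by exists phi.
by exists phi; split.
Qed.
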